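(* Let $n\ge 3$ and $m\ge 2$ be integers, $C_n$ the cycle on $n$ vertices and $P_m$ the path on $m$ vertices. Then $AT(C_n+_S P_m)=3$.
   Context: For an orientation $D$, a subdigraph is Eulerian if every vertex has equal in- and outdegree in it; $D$ is an AT-orientation if the numbers of Eulerian subgraphs with an even and with an odd number of arcs differ; $AT(G)$ is the smallest $k$ such that $G$ has an AT-orientation of maximum outdegree at most $k-1$. $S(G)$ is obtained from $G$ by subdividing each edge once, with vertex set identified with $V(G)\cup E(G)$. $G+_S H$ has vertex set $(V(G)\cup E(G))\times V(H)$, with $(u_1,u_2)\sim(v_1,v_2)$ iff [$u_1=v_1\in V(G)$ and $u_2v_2\in E(H)$] or [$u_2=v_2$ and $u_1v_1\in E(S(G))$]. *)

(* Defs.v *)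
(* Simple graphs are symmetric irreflexive relations on a finType. *)
From mathcomp Require Import all_boot.
Set Implicit Arguments. Unset Strict Implicit. Unset Printing Implicit Defensive.

Section Orientations.
Variable T : finType.

Definition is_orientation (e D : rel T) : Prop :=
  (forall x y, e x y = (D x y || D y x)) /\ (forall x y, ~~ (D x y && D y x)).

Definition outdeg (D : rel T) (v : T) : nat := #|[set w | D v w]|.

Definition eulerian (D : rel T) (A : {set T * T}) : bool :=
  [forall p in A, D p.1 p.2] &&
  [forall v, #|[set w | (v, w) \in A]| == #|[set w | (w, v) \in A]|].

Definition n_even_eulerian (D : rel T) : nat :=
  #|[set A : {set T * T} | eulerian D A & ~~ odd #|A|]|.
Definition n_odd_eulerian (D : rel T) : nat :=
  #|[set A : {set T * T} | eulerian D A & odd #|A|]|.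

Definition AT_orientation (e D : rel T) : Prop :=
  is_orientation e D /\ n_even_eulerian D <> n_odd_eulerian D.

Definition has_AT (e : rel T) (k : nat) : Prop :=
  exists D : rel T, AT_orientation e D /\ forall v, outdeg D v < k.

Definition AT_number_is (e : rel T) (k : nat) : Prop :=
  has_AT e k /\ forall j, j < k -> ~ has_AT e j.
End Orientations.

Section Subdivision.
Variable V : finType.
Variable e : rel V.

Definition edge_type : Type :=
  {X : {set V} | [exists u, exists v, e u v && (X == [set u; v])]}.

Definition svert : finType := (V + edge_type)%type.

Definition sadj : rel svert := fun a b =>
  match a, b with
  | inl v, inr X => v \in val X
  | inr X, inl v => v \in val X
  | _, _ => false
  end.

Variable W : finType.
Variable h : rel W.

Definition splus_adj : rel (svert * W) := fun a b =>
  (match a.1, b.1 with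
   | inl u, inl v => (u == v) && h a.2 b.2
   | _, _ => false
   end)
  || ((a.2 == b.2) && sadj a.1 b.1).
End Subdivision.

Definition cycle_adj (n : nat) : rel (ordinal n) := fun (i j : ordinal n) =>
  (j == (i.+1 %% n) :> nat) || (i == (j.+1 %% n) :> nat).

Definition path_adj (m : nat) : rel (ordinal m) := fun (i j : ordinal m) =>
  (i.+1 == j :> nat) || (j.+1 == i :> nat).

Arguments cycle_adj n : clear implicits.
Arguments path_adj m : clear implicits.
Arguments splus_adj {V} e {W} h.

(* Main.v *)
Require Import Defs.
From mathcomp Require Import all_boot.
From mathcomp Require Import zify.
Set Implicit Arguments. Unset Strict Implicit. Unset Printing Implicit Defensive.

Section S.
Variables n m : nat.
Hypothesis n3 : 3 <= n.
Hypothesis m2 : 2 <= m.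
Local Notation T := (svert (cycle_adj n) * 'I_m)%type.
Local Notation E := (splus_adj (cycle_adj n) (path_adj m)).

Lemma cycle_irr (u : 'I_n) : cycle_adj n u u = false.
Proof.
rewrite /cycle_adj orbb; apply/negbTE/eqP => /= H.
have := ltn_ord u; case: (ltngtP u.+1 n) => H1 H2.
- by move: H; rewrite modn_small //; lia.
- lia.
- by move: H; rewrite H1 modnn; lia.
Qed.

Lemma E_sym (x y : T) : E x y = E y x.
Proof.
case: x => [x1 a]; case: y => [y1 b]; move: x1 y1; rewrite /svert /=; move=> [u|X] [v|Y]; rewrite /splus_adj /= ?(eq_sym a b) //.
by rewrite !andbF !orbF (eq_sym u v) /path_adj orbC.
Qed.

Definition rk (x : T) : nat := match x.1 with inl _ => val x.2 | inr _ => m end.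

Lemma E_rk (x y : T) : E x y -> rk x != rk y.
Proof.
case: x => [x1 a]; case: y => [y1 b]; move: x1 y1; rewrite /svert /=; move=> [u|X] [v|Y]; rewrite /splus_adj /rk /= ?orbF ?andbF //.
- rewrite orbF /path_adj => /andP[_ /orP[] /eqP H]; apply/eqP; lia.
- by move=> _; have := ltn_ord a; lia.
- by move=> _; have := ltn_ord b; lia.
Qed.

Definition D0 : rel T := fun x y => E x y && (rk y < rk x).

Lemma D0_orient : is_orientation E D0.
Proof.
split=> x y; rewrite /D0.
- case Exy: (E x y); rewrite -E_sym Exy //=.
  by have := E_rk Exy; lia.
- apply/negP => /andP[/andP[_ H1] /andP[_ H2]]; lia.
Qed.

Lemma D0_eul (A : {set T * T}) : eulerian D0 A -> A = set0.
Proof.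
case/andP => /forallP HA /forallP HE.
case: (set_0Vmem A) => [//|[p0 Hp0]].
case: (arg_maxnP (fun p : T * T => rk p.1) Hp0) => p pA pmax.
have := HE p.1; move/eqP => Hc.
have : 0 < #|[set w | (w, p.1) \in A]|.
  rewrite -Hc; apply/card_gt0P; exists p.2; rewrite inE -surjective_pairing //.
case/card_gt0P => w; rewrite inE => wA.
have := HA (w, p.1); rewrite wA /= /D0 => /andP[_ H1].
have := pmax _ wA; rewrite /=; lia.
Qed.

Lemma eul0 : eulerian D0 set0.
Proof.
apply/andP; split; apply/forallP => v; rewrite ?inE //.
rewrite (_ : [set w | (v, w) \in set0] = set0); last by apply/setP => w; rewrite !inE.
rewrite (_ : [set w | (w, v) \in set0] = set0) //; by apply/setP => w; rewrite !inE.
Qed.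

Lemma even0 : n_even_eulerian D0 = 1.
Proof.
rewrite /n_even_eulerian (_ : [set A | _ & _] = [set set0]) ?cards1 //.
apply/setP => A; rewrite !inE; apply/idP/eqP.
- by case/andP => /D0_eul.
- by move=> ->; rewrite eul0 cards0.
Qed.

Lemma odd0 : n_odd_eulerian D0 = 0.
Proof.
rewrite /n_odd_eulerian (_ : [set A | _ & _] = set0) ?cards0 //.
apply/setP => A; rewrite !inE; apply/negbTE/negP => /andP[/D0_eul -> ].
by rewrite cards0.
Qed.

Lemma D0_out (x : T) : outdeg D0 x < 3.
Proof.
case: x => x1 a; move: x1; rewrite /svert /=; move=> [v|X]; rewrite /outdeg.
- apply: (@leq_ltn_trans 1) => //.
  apply/card_le1_eqP => w1 w2; rewrite !inE.
  case: w1 => y1 b1; case: w2 => y2 b2; move: y1 y2; rewrite /svert /=; move=> [u1|Y1] [u2|Y2];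
    rewrite /D0 /splus_adj /rk /= ?andbF ?orbF /path_adj; try (have := ltn_ord a; lia).
  move=> /andP[/andP[/eqP <- H1] H2] /andP[/andP[/eqP <- H3] H4].
  congr (_, _); apply/val_inj => /=.
  lia.
- case/existsP: (valP X) => u0 /existsP [w0 /andP [_ /eqP EX]].
  apply: (@leq_ltn_trans #|[set ((inl u0 : svert (cycle_adj n)), a); (inl w0, a)]|); last first.
    by rewrite cards2; case: (_ != _).
  apply/subset_leq_card/subsetP => w; rewrite !inE.
  case: w => y b; case: y => [u|Y];
    rewrite /D0 /splus_adj /rk /= ?andbF ?orbF //.
  move=> /andP[/andP[/eqP <- ] ]; rewrite -[sval X]/(val X) EX !inE => /orP[] /eqP -> _; by rewrite eqxx ?orbT.
Qed.

Lemma upper : has_AT E 3.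
Proof.
exists D0; split; first split.
- exact: D0_orient.
- by rewrite even0 odd0.
- exact: D0_out.
Qed.

Lemma cardsE (P : pred T) : #|[set y | P y]| = \sum_y (P y : nat).
Proof. by rewrite -sum1dep_card big_mkcond; apply: eq_bigr => y _; case: (P y). Qed.

Lemma deg_sum (D : rel T) : is_orientation E D ->
  \sum_x #|[set y | E x y]| = 2 * \sum_x outdeg D x.
Proof.
case=> H1 H2.
have -> : \sum_x #|[set y | E x y]| = \sum_x \sum_y ((D x y : nat) + D y x).
  apply: eq_bigr => x _; rewrite cardsE; apply: eq_bigr => y _.
  by rewrite H1; have := H2 x y; case: (D x y); case: (D y x).
have HS : \sum_x outdeg D x = \sum_x \sum_y (D x y : nat).
  by apply: eq_bigr => x _; rewrite /outdeg cardsE.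
under eq_bigr => x _ do rewrite big_split.
rewrite big_split /= [X in _ + X]exchange_big /= HS mul2n -addnn //.
Qed.

Let n0 : 0 < n. Proof. lia. Qed.
Definition succ (u : 'I_n) : 'I_n := Ordinal (ltn_pmod u.+1 n0).

Lemma mk_edge_pf (u : 'I_n) :
  [exists u', exists v, cycle_adj n u' v && ([set u; succ u] == [set u'; v])].
Proof.
apply/existsP; exists u; apply/existsP; exists (succ u).
by rewrite eqxx andbT /cycle_adj /= eqxx.
Qed.

Definition mk_edge (u : 'I_n) : edge_type (cycle_adj n) :=
  exist _ [set u; succ u] (mk_edge_pf u).

Definition pn (a : 'I_m) : 'I_m.
Proof. refine (@Ordinal m (if nat_of_ord a == 0 then 1 else (nat_of_ord a).-1) _).
case: ifP => _; [lia | have := ltn_ord a; lia]. Defined.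

Lemma E_pn (v : 'I_n) (a : 'I_m) :
  E ((inl v : svert (cycle_adj n)), a) (inl v, pn a).
Proof.
rewrite /splus_adj /= eqxx /= andbF orbF /path_adj /pn /=.
case: ifP => /eqP H; lia.
Qed.

Lemma E_edge (v : 'I_n) (a : 'I_m) :
  E ((inl v : svert (cycle_adj n)), a) (inr (mk_edge v), a).
Proof. by rewrite /splus_adj /= eqxx /= !inE eqxx. Qed.

Lemma deg2 (x : T) : 2 <= #|[set y | E x y]|.
Proof.
case: x => x1 a; move: x1; rewrite /svert /=; move=> [v|X].
- apply/card_geqP; exists [:: (inl v, pn a); (inr (mk_edge v), a)]; split => //.
  move=> y; rewrite !inE => /orP[] /eqP ->; [exact: E_pn | exact: E_edge].
- case/existsP: (valP X) => u0 /existsP [w0 /andP [Huw /eqP EX]].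
  apply/card_geqP; exists [:: ((inl u0 : svert (cycle_adj n)), a); (inl w0, a)]; split => //.
  + rewrite /= andbT inE; apply/negP => /eqP [E0]; by rewrite E0 cycle_irr in Huw.
  + move=> y; rewrite !inE => /orP[] /eqP ->;
    by rewrite /splus_adj /= eqxx -[sval X]/(val X) EX !inE eqxx ?orbT.
Qed.

Let n1 : 1 < n. Proof. lia. Qed.
Let m0 : 0 < m. Proof. lia. Qed.
Definition o0 : 'I_n := Ordinal n0.
Definition o1 : 'I_n := Ordinal n1.
Definition ao : 'I_m := Ordinal m0.
Definition x0 : T := (inl o1, ao).

Lemma edge_ne : mk_edge o1 != mk_edge o0.
Proof.
apply/negP => /eqP H.
have : o0 \in val (mk_edge o0) by rewrite !inE eqxx.
rewrite -H /= !inE => /orP[] /eqP /(congr1 val) /=.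
- by [].
- by rewrite modn_small //; lia.
Qed.

Lemma deg3 : 3 <= #|[set y | E x0 y]|.
Proof.
apply/card_geqP.
exists [:: (inl o1, pn ao); (inr (mk_edge o1), ao); (inr (mk_edge o0), ao)]; split => //.
- rewrite /= !inE !andbT; apply/negP => /eqP [] /eqP; apply/negP; exact: edge_ne.
- move=> y; rewrite !inE => /orP[/eqP ->|/orP[] /eqP ->]; [exact: E_pn | exact: E_edge |].
  rewrite /x0 /splus_adj /= !inE; apply/orP; right; apply/eqP/val_inj => /=.
  by rewrite modn_small.
Qed.

Lemma lower j : j < 3 -> ~ has_AT E j.
Proof.
move=> Hj [D [[HD _] Hout]].
have Hs := deg_sum HD.
have Ho : forall x, 2 * outdeg D x <= 2 by move=> x; have := Hout x; lia.
have H1 : 2 * outdeg D x0 < #|[set y | E x0 y]| by have := Ho x0; have := deg3; lia.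
have H2 : \sum_(x | x != x0) 2 * outdeg D x <= \sum_(x | x != x0) #|[set y | E x y]|.
  apply: leq_sum => x _; apply: leq_trans (Ho x) (deg2 x).
move: Hs; rewrite big_distrr /= (bigD1 x0) //= [X in _ = X](bigD1 x0) //=.
move=> Hs; have := leq_add H1 H2; rewrite Hs addSn ltnn //.
Qed.
End S.

Theorem corollary3p4 (n m : nat) :
  3 <= n -> 2 <= m ->
  AT_number_is (splus_adj (cycle_adj n) (path_adj m)) 3.
Proof.
move=> n3 m2; split; first exact: upper.
move=> j Hj; exact: lower.
Qed.
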